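(* Let $(G,S,\mathcal{P},k)$ be an instance of \textsc{Pair-Constrained Edge Subset Feedback Vertex Set} with $G=(V,E)$. Let $Z\subseteq V\setminus V(S)$ be such that $G-Z$ contains no $S$-cycle, and let $Y$ be a set with $Z\subseteq Y\subseteq V\setminus V(S)$ (hence $G-Y$ contains no $S$-cycle). Let $e=\{I,J\}$ be an edge of $H_Y$ such that $e$ sees no single vertex of $Y$ and every pair $\{x,y\}$ with $x,y\in Y$ seen by $e$ belongs to $\mathcal{P}$. Then $e_S$ is irrelevant for $(G,S,\mathcal{P},k)$.
   Context: Graphs are finite, undirected, may contain loops and parallel edges; an $S$-cycle is a cycle containing an edge of $S$; $V(S)$ is the set of endpoints of edges of $S$. An instance $(G,S,\mathcal{P},k)$ of \textsc{Pair-Constrained Edge Subset Feedback Vertex Set} consists of a graph $G=(V,E)$, $S\subseteq E$, a set $\mathcal{P}$ of unordered pairs of distinct vertices (pair-constraints), and $k\in\mathbb{N}$; a solution is $X\subseteq V$ with $|X|\le k$ such that $G-X$ contains no $S$-cycle and $X\cap\{x,y\}\neq\emptyset$ for every $\{x,y\}\in\mathcal{P}$. An edge $f\in S$ is irrelevant for $(G,S,\mathcal{P},k)$ if for every $X\subseteq V$: $X$ is a solution for $(G,S,\mathcal{P},k)$ iff $X$ is a solution for $(G,S\setminus\{f\},\mathcal{P},k)$. Bubbles: the connected components of $G-Y-S$ (delete the vertices of $Y$ and the edges of $S$); $V_I$ denotes the vertex set of bubble $I$. $H_Y$ is the graph whose vertices are the bubbles, with bubbles $I,J$ adjacent iff some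 edge of $S$ joins $V_I$ and $V_J$; since $G-Y$ has no $S$-cycle, for adjacent $I,J$ there is exactly one such edge, denoted $e_S$ for $e=\{I,J\}$. $H_Y^+$ is obtained from $H_Y$ by adding the vertices of $Y$ and an edge $\{y,I\}$ whenever $y\in Y$ is adjacent in $G$ to a vertex of $V_I$. An edge $e=\{I,J\}$ of $H_Y$ sees a vertex $y\in Y$ if $\{I,y\},\{J,y\}\in E(H_Y^+)$, and sees a pair $\{x,y\}$ of distinct $x,y\in Y$ if $\{I,x\},\{J,y\}\in E(H_Y^+)$ or $\{I,y\},\{J,x\}\in E(H_Y^+)$. *)

(* Defs.v *)
From mathcomp Require Import all_boot.
Set Implicit Arguments. Unset Strict Implicit. Unset Printing Implicit Defensive.

(* A finite multigraph (loops and parallel edges allowed): vertex type V,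
   edge type E, each edge g has (unordered) endpoints ends g = (u, v);
   a loop has u = v. *)
Section MultiGraph.
Variables (V E : finType) (ends : E -> V * V).

Definition joins (g : E) (u v : V) : bool :=
  (ends g == (u, v)) || (ends g == (v, u)).

(* A cycle: vertices vs = v_0..v_{n-1} pairwise distinct, edges
   es = g_0..g_{n-1} pairwise distinct, n >= 1, g_i joins v_i and
   v_{(i+1) mod n}. (n = 1: a loop; n = 2: two parallel edges.) *)
Definition is_cycle (vs : seq V) (es : seq E) : Prop :=
  [/\ size vs = size es, 0 < size vs, uniq vs, uniq es &
      forall (i : nat) (v0 : V) (g0 : E), i < size vs ->
        joins (nth g0 es i) (nth v0 vs i) (nth v0 vs (i.+1 %% size vs))].

Definition has_S_cycle_avoiding (S : {set E}) (X : {set V}) : Prop :=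
  exists (vs : seq V) (es : seq E),
    [/\ is_cycle vs es, all (fun v => v \notin X) vs & has (fun g => g \in S) es].

Definition VS (S : {set E}) : {set V} :=
  [set v | [exists g in S, (v == (ends g).1) || (v == (ends g).2)]].

Definition is_solution (S : {set E}) (P : {set {set V}}) (k : nat)
  (X : {set V}) : Prop :=
  [/\ #|X| <= k, ~ has_S_cycle_avoiding S X &
      forall p, p \in P -> X :&: p != set0].

Definition irrelevant (S : {set E}) (P : {set {set V}}) (k : nat) (f : E) : Prop :=
  f \in S /\
  forall X : {set V}, is_solution S P k X <-> is_solution (S :\ f) P k X.

Definition adjYS (S : {set E}) (Y : {set V}) : rel V :=
  fun u v => [&& u \notin Y, v \notin Y & [exists g, (g \notin S) && joins g u v]].

(* the bubble (component of G - Y - S) containing a (for a \notin Y) *)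
Definition bubble_of (S : {set E}) (Y : {set V}) (a : V) : {set V} :=
  [set v | connect (adjYS S Y) a v].

Definition is_bubble (S : {set E}) (Y : {set V}) (B : {set V}) : Prop :=
  exists a, a \notin Y /\ B = bubble_of S Y a.

(* edge {y, I} of H_Y^+ : y is adjacent in G to a vertex of V_I *)
Definition adjHplus (y : V) (I : {set V}) : Prop :=
  exists v g, v \in I /\ joins g y v.

Definition sees_vertex (I J : {set V}) (y : V) : Prop :=
  adjHplus y I /\ adjHplus y J.

Definition sees_pair (I J : {set V}) (x y : V) : Prop :=
  (adjHplus x I /\ adjHplus y J) \/ (adjHplus y I /\ adjHplus x J).

End MultiGraph.

(* Main.v *)
Require Import Defs.
From mathcomp Require Import all_boot.
From mathcomp Require Import zify.

Lemma modlt2 x n : n <= x -> x < n + n -> x %% n = x - n.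
Proof. move=> h1 h2. rewrite -{1}(subnK h1) modnDr modn_small //; lia. Qed.

Lemma mod_ne i0 j n : j.+1 < n -> i0 < n -> (i0 + j.+1) %% n <> i0.
Proof. move=> h1 h2. case: (ltnP (i0 + j.+1) n) => h3.
 rewrite modn_small //; lia. rewrite modlt2 //; lia. Qed.

Lemma mod_last i0 n : 0 < n -> i0 < n -> (i0 + n.-1.+1) %% n = i0.
Proof. move=> h1 h2. by rewrite prednK // modnDr modn_small. Qed.

Lemma modS x n : (x %% n).+1 %% n = x.+1 %% n.
Proof. by rewrite -addn1 modnDml addn1. Qed.

Section Aux.
Variables (V E : finType) (ends : E -> V * V) (S : {set E}) (Y : {set V}).

Lemma joinsC g u v : joins ends g u v = joins ends g v u.
Proof. by rewrite /joins orbC. Qed.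

Lemma adjYS_sym : symmetric (adjYS ends S Y).
Proof.
move=> u v; rewrite /adjYS; apply/and3P/and3P => [] [h1 h2 /existsP [g /andP [g1 g2]]];
 split=> //; apply/existsP; exists g; by rewrite g1 joinsC.
Qed.

Lemma bubble_notY a0 v : a0 \notin Y -> v \in bubble_of ends S Y a0 -> v \notin Y.
Proof.
move=> a0Y; rewrite inE => /connectP [p pth ->].
case/lastP: p pth => [|p z] //.
rewrite rcons_path last_rcons => /andP [_ /and3P [_ h _]] //.
Qed.

Lemma bubble_eq a b v : v \in bubble_of ends S Y a -> v \in bubble_of ends S Y b ->
  bubble_of ends S Y a = bubble_of ends S Y b.
Proof.
rewrite !inE => ha hb.
have csym := sym_connect_sym adjYS_sym.
have hab : connect (adjYS ends S Y) a b by apply: connect_trans ha _; rewrite csym.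
apply/setP => z; rewrite !inE; apply/idP/idP => h.
  by apply: connect_trans h; rewrite csym.
exact: connect_trans hab h.
Qed.

Lemma walk_exit (w : nat -> V) (h : nat -> E) m a0 :
  a0 \notin Y ->
  (forall j, j < m -> h j \notin S /\ joins ends (h j) (w j) (w j.+1)) ->
  w 0 \in bubble_of ends S Y a0 -> w m \notin bubble_of ends S Y a0 ->
  exists i, [/\ i <= m, w i \in Y & adjHplus ends (w i) (bubble_of ends S Y a0)].
Proof.
move=> a0Y hw h0 hm.
suff H : forall j, j <= m -> w j \in bubble_of ends S Y a0 \/
  exists i, [/\ i <= m, w i \in Y & adjHplus ends (w i) (bubble_of ends S Y a0)].
  by case: (H m (leqnn m)) => // hh; rewrite hh in hm.
elim=> [|j IH] hj; first by left.
case: (IH (ltnW hj)) => [hin|]; last by right.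
have [hS hjn] := hw j hj.
case: (boolP (w j.+1 \in Y)) => wY.
  right; exists j.+1; split=> //.
  by exists (w j), (h j); rewrite joinsC.
left; move: (hin); rewrite !inE => c; apply: connect_trans c (connect1 _).
apply/and3P; split=> //; first exact: bubble_notY hin.
by apply/existsP; exists (h j); rewrite hS.
Qed.

Lemma walk_both (w : nat -> V) (h : nat -> E) m a1 b1 :
  a1 \notin Y -> b1 \notin Y ->
  bubble_of ends S Y a1 != bubble_of ends S Y b1 ->
  (forall j, j < m -> h j \notin S /\ joins ends (h j) (w j) (w j.+1)) ->
  w 0 \in bubble_of ends S Y a1 -> w m \in bubble_of ends S Y b1 ->
  exists i j, [/\ i <= m, j <= m, w i \in Y, w j \in Y &
     adjHplus ends (w i) (bubble_of ends S Y a1) /\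
     adjHplus ends (w j) (bubble_of ends S Y b1)].
Proof.
move=> a1Y b1Y ne hw h0 hm.
have [i [im wiY adi]] : exists i, [/\ i <= m, w i \in Y & adjHplus ends (w i) (bubble_of ends S Y a1)].
  apply: walk_exit hw h0 _ => //; apply/negP => hh.
  by move/eqP: ne; apply; apply: bubble_eq hh hm.
have [j' [jm wjY adj]] : exists i, [/\ i <= m, w (m - i) \in Y &
   adjHplus ends (w (m - i)) (bubble_of ends S Y b1)].
  apply: (@walk_exit (fun j => w (m - j)) (fun j => h (m - j.+1))) => //.
  - move=> j jm; have [hS hj] := hw (m - j.+1) ltac:(lia).
    split=> //; have -> : m - j = (m - j.+1).+1 by lia.
    by rewrite joinsC.
  - by rewrite subn0.
  - rewrite subnn; apply/negP => hh.
    by move/eqP: ne; apply; apply: bubble_eq h0 hh.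
exists i, (m - j'); split=> //; exact: leq_subr.
Qed.

End Aux.

Theorem lemma14 (V E : finType) (ends : E -> V * V) (S : {set E})
  (P : {set {set V}}) (k : nat) (Z Y : {set V}) (I J : {set V}) (f : E) :
  (forall p, p \in P -> #|p| = 2) ->
  Z \subset ~: VS ends S ->
  ~ has_S_cycle_avoiding ends S Z ->
  Z \subset Y -> Y \subset ~: VS ends S ->
  (* e = {I,J} is an edge of H_Y, and e_S = f *)
  is_bubble ends S Y I -> is_bubble ends S Y J -> I != J ->
  f \in S -> (exists a b, [/\ a \in I, b \in J & joins ends f a b]) ->
  (* e sees no single vertex of Y *)
  (forall y, y \in Y -> ~ sees_vertex ends I J y) ->
  (* every pair seen by e is a pair-constraint *)
  (forall x y, x \in Y -> y \in Y -> x != y -> sees_pair ends I J x y ->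
     [set x; y] \in P) ->
  irrelevant ends S P k f.
Proof.
move=> _ _ _ _ _ [a0 [a0Y defI]] [b0 [b0Y defJ]] IJ fS [a [b [aI bJ fab]]] nov pairs.
split=> // X; split.
  case=> Xk Hc Hp; split=> // [] [vs [es [cyc allX hasS]]]; apply: Hc.
  exists vs, es; split=> //; apply: sub_has hasS => g; rewrite !inE; by case/andP.
case=> Xk Hc Hp; split=> // [] [vs [es [cyc allX hasS]]].
case: (boolP (has (fun g => g \in S :\ f) es)) => hf.
  by apply: Hc; exists vs, es.
have fin : forall x y, x \in Y -> y \in Y -> x \notin X -> y \notin X ->
    adjHplus ends x I -> adjHplus ends y J -> False.
  move=> x y xY yY xX yX ax ay.
  case: (eqVneq x y) => [exy|nxy].
    by subst y; apply: (nov x xY); split.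
  have := Hp _ (pairs x y xY yY nxy (or_introl (conj ax ay))).
  suff -> : X :&: [set x; y] = set0 by rewrite eqxx.
  apply/setP => z; rewrite !inE.
  apply/negbTE/negP => /andP [zX /orP [] /eqP ez]; subst z.
    by rewrite zX in xX.
  by rewrite zX in yX.
case/hasP: hasS => g gin gS.
have gf : g = f.
  apply/eqP; apply/negPn/negP => ngf; move/hasPn: hf => /(_ g gin); by rewrite !inE ngf gS.
subst g.
case: cyc => sz npos uvs ues cycP.
set n := size vs.
set i0 := index f es.
have i0n : i0 < n by rewrite /n sz index_mem.
pose w j := nth a vs ((i0 + j.+1) %% n).
pose h j := nth f es ((i0 + j.+1) %% n).
have hw : forall j, j < n.-1 -> h j \notin S /\ joins ends (h j) (w j) (w j.+1).
  move=> j jm; have idx := ltn_pmod (i0 + j.+1) npos.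
  split.
    apply/negP => hS.
    have hin : h j \in es by rewrite /h mem_nth // -sz.
    have : h j != f.
      have i0e : nth f es i0 = f by exact: nth_index.
      have jm' : j.+1 < n by move: jm; case: (n) npos => // n' _; rewrite ltnS.
      have hne : (i0 + j.+1) %% n != i0 by apply/eqP; exact: mod_ne.
      rewrite /h -[X in _ != X]i0e.
      rewrite (nth_uniq f _ _ ues) //; rewrite -sz //.
    move=> hne; move/hasPn: hf => /(_ _ hin); by rewrite !inE hne hS.
  have := cycP _ a f idx; rewrite -/n modS /w /h.
  by rewrite -addnS.
have wX : forall j, w j \notin X.
  move=> j; move/allP: allX; apply; rewrite /w mem_nth //; exact: ltn_pmod.
have wm : w n.-1 = nth a vs i0 by rewrite /w mod_last.
have w0 : w 0 = nth a vs (i0.+1 %% n) by rewrite /w addn1.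
have fj : joins ends f (nth a vs i0) (nth a vs (i0.+1 %% n)).
  by have := cycP i0 a f i0n; rewrite nth_index.
have IJ' : bubble_of ends S Y a0 != bubble_of ends S Y b0 by rewrite -defI -defJ.
move: fj fab; rewrite /joins.
have key : forall u v, ends f = (u, v) \/ ends f = (v, u) -> ends f = (a, b) \/ ends f = (b, a) ->
   (u = a /\ v = b) \/ (u = b /\ v = a).
  move=> u v [->|->] [[-> ->]|[-> ->]]; tauto.
move=> /orP h1 /orP h2.
have h1' : ends f = (nth a vs i0, nth a vs (i0.+1 %% n)) \/ ends f = (nth a vs (i0.+1 %% n), nth a vs i0)
  by case: h1 => /eqP; tauto.
have h2' : ends f = (a, b) \/ ends f = (b, a) by case: h2 => /eqP; tauto.
case: (key _ _ h1' h2') => [[ea eb]|[eb ea]].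
-
  have := @walk_both V E ends S Y w h n.-1 b0 a0 b0Y a0Y _ hw.
  rewrite w0 wm eb ea -defI -defJ eq_sym => /(_ IJ bJ aI) [i [j [_ _ wiY wjY [ai aj]]]].
  exact: (fin _ _ wjY wiY (wX j) (wX i) aj ai).
- have := @walk_both V E ends S Y w h n.-1 a0 b0 a0Y b0Y _ hw.
  rewrite w0 wm eb ea -defI -defJ => /(_ IJ aI bJ) [i [j [_ _ wiY wjY [ai aj]]]].
  exact: (fin _ _ wiY wjY (wX i) (wX j) ai aj).
Qed.
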